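(* Let $(M,d)$ be a compact metric space, $\varphi:M\to M$ continuous and $\mathcal G=\{G_n\}\in\mathcal A(M)$. Then $$\lim_{\delta\downarrow0}\limsup_{n\to\infty}\sup_{x\in M}\sup_{y,z\in B_n(x,\delta)}\tfrac1n|G_n(y)-G_n(z)|=0.$$ Moreover, if integers $m_\delta(n)\in\{0,\dots,n-1\}$ satisfy $\lim_{\delta\downarrow0}\limsup_{n}\frac1nm_\delta(n)=0$, then $$\lim_{\delta\downarrow0}\limsup_{n}\tfrac1n\|G_{n-m_\delta(n)}-G_n\|_\infty=0,\qquad \lim_{\delta\downarrow0}\limsup_{n}\sup_{x\in M}\sup_{y,z\in B_{n-m_\delta(n)}(x,\delta)}\tfrac1n|G_n(y)-G_n(z)|=0.$$
   Context: $C(M),B(M)$: continuous/bounded Borel real functions with sup norm; $S_nG=\sum_{k<n}G\circ\varphi^k$; $B_n(x,\delta)=\{y:d(\varphi^ky,\varphi^kx)<\delta,\ 0\le k\le n-1\}$. $\mathcal A(M)$: sequences $\{G_n\}\subset B(M)$ for which some $\{G^{(k)}\}\subset C(M)$ has $\lim_k\limsup_nn^{-1}\|G_n-S_nG^{(k)}\|_\infty=0$. *)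

(* Defs.v *)
From HB Require Import structures.
From mathcomp Require Import all_boot all_order all_algebra.
From mathcomp Require Import all_classical all_reals all_analysis.
Set Implicit Arguments. Unset Strict Implicit. Unset Printing Implicit Defensive.
Import Order.TTheory GRing.Theory Num.Theory.
Import numFieldNormedType.Exports.
Local Open Scope classical_set_scope.
Local Open Scope ring_scope.

Definition is_metric_for {R : realType} {M : pseudoMetricType R} (d : M -> M -> R) :=
  [/\ (forall x y, 0 <= d x y), (forall x y, d x y = 0 <-> x = y),
      (forall x y, d x y = d y x), (forall x y z, d x z <= d x y + d y z)
    & (forall (x : M) (e : R) (y : M), ball x e y <-> d x y < e)].

Definition borel_set {M : topologicalType} (A : set M) : Prop := <<s open >> A.

Definition bounded_borel {R : realType} {M : topologicalType} (f : M -> R) : Prop :=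
  (exists C : R, forall x, `|f x| <= C) /\
  (forall B : set R, measurable B -> borel_set (f @^-1` B)).

Definition supnorm {R : realType} {M : Type} (f : M -> R) : \bar R :=
  ereal_sup [set (`|f x|)%:E | x in [set: M]].

Definition birkhoff {R : realType} {M : Type} (phi : M -> M) (n : nat) (G : M -> R) : M -> R :=
  fun x => \sum_(k < n) G (iter k phi x).

Definition bowen_ball {R : realType} {M : Type} (d : M -> M -> R) (phi : M -> M)
  (n : nat) (x : M) (delta : R) : set M :=
  [set y | forall k : nat, (k < n)%N -> d (iter k phi y) (iter k phi x) < delta].

Definition class_A {R : realType} {M : pseudoMetricType R} (phi : M -> M)
  (G : nat -> M -> R) : Prop :=
  (forall n, bounded_borel (G n)) /\
  exists Gk : nat -> M -> R, (forall k, continuous (Gk k)) /\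
    (fun k => limn_esup (fun n : nat =>
        ((n%:R^-1)%:E * supnorm (fun x => G n x - birkhoff phi n (Gk k) x)%R)%E))
      @ \oo --> 0%E.

Definition bowen_osc {R : realType} {M : Type} (d : M -> M -> R) (phi : M -> M)
  (G : nat -> M -> R) (n p : nat) (delta : R) : \bar R :=
  ereal_sup [set ((n%:R^-1) * `|G n yz.1 - G n yz.2|)%:E | yz in
     [set yz : M * M | exists x, bowen_ball d phi p x delta yz.1 /\
                                 bowen_ball d phi p x delta yz.2]].

(* Main.v *)
Require Import Defs.
From HB Require Import structures.
From mathcomp Require Import all_boot all_order all_algebra.
From mathcomp Require Import all_classical all_reals all_analysis.
Import Order.TTheory GRing.Theory Num.Theory.
Import numFieldNormedType.Exports.
Local Open Scope classical_set_scope.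
Local Open Scope ring_scope.
From mathcomp Require Import lra ring.
Section Tools.
Variable R : realType.
Local Open Scope ereal_scope.

Lemma esup_le (u : nat -> \bar R) (c : \bar R) N :
  (forall n, (N <= n)%N -> u n <= c) -> limn_esup u <= c.
Proof.
move=> H; rewrite /limn_esup limf_esupE.
apply: le_trans (ereal_inf_lbound _) _.
  by exists [set n | (N <= n)%N]; [exists N|].
by apply: ge_ereal_sup => _ [n /= Nn <-]; apply: H.
Qed.

Lemma esup_lt (u : nat -> \bar R) (c : \bar R) :
  limn_esup u < c -> \forall n \near \oo, u n < c.
Proof.
rewrite /limn_esup limf_esupE => /ereal_inf_lt[_ [V FV <-]] Vc.
apply: filterS FV => n Vn; apply: le_lt_trans Vc.
by apply: ereal_sup_ubound; exists n.
Qed.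

Lemma esup_ge0 (u : nat -> \bar R) : (forall n, 0 <= u n) -> 0 <= limn_esup u.
Proof.
move=> H; apply: limf_esup_ge0 => //.
Qed.

Lemma ecvg0_bnd (T : Type) (F : set_system T) (FF : Filter F) (f : T -> \bar R) (e : R) :
  f @ F --> 0 -> (0 < e)%R -> \forall x \near F, (- e)%:E < f x < e%:E.
Proof.
move=> /fine_cvgP [fin cv] e0.
have h1 : \forall x \near F, (fine (f x) < e)%R by exact: (cvgr_lt 0%R cv e e0).
have h2 : \forall x \near F, (- e < fine (f x))%R by apply: (cvgr_gt 0%R cv); rewrite oppr_lt0.
near=> x.
have fx : f x \is a fin_num by near: x.
have a : (- e < fine (f x))%R by near: x.
have b : (fine (f x) < e)%R by near: x.
by rewrite -(fineK fx) !lte_fin a b.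
Unshelve. all: by end_near. Qed.

Lemma crit0 (f : R -> \bar R) :
  (forall e : R, (0 < e)%R -> \forall x \near (0:R)^'+, 0 <= f x <= e%:E) ->
  f @ (0:R)^'+ --> 0.
Proof.
move=> H; apply/fine_cvgP; split.
  apply: filterS (H 1%R ltr01) => x /andP[a b].
  by rewrite ge0_fin_numE// (le_lt_trans b)// ltry.
apply/cvgrPdist_le => e e0.
apply: filterS (H e e0) => x /andP[a b] /=.
rewrite sub0r normrN ger0_norm; last by rewrite fine_ge0.
by rewrite -lee_fin fineK// ge0_fin_numE// (le_lt_trans b)// ltry.
Qed.

End Tools.
Section Birk.
Variable R : realType.

Lemma birk_diff_le (T : Type) (phi : T -> T) (g : T -> R) C p n x :
  (p <= n)%N -> (forall y, `|g y| <= C) ->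
  `|birkhoff phi n g x - birkhoff phi p g x| <= (n - p)%:R * C.
Proof.
move=> pn gC; rewrite /birkhoff -!(big_mkord xpredT (fun k => g (iter k phi x))).
rewrite (big_cat_nat (leq0n p) pn) /= addrC addrK.
apply: le_trans (ler_norm_sum _ _ _) _.
apply: le_trans (ler_sum _ (fun i _ => gC (iter i phi x))) _.
by rewrite sumr_const_nat mulr_natl.
Qed.

Lemma birk_osc_le (T : Type) (phi : T -> T) (g : T -> R) w p y z :
  (forall k, (k < p)%N -> `|g (iter k phi y) - g (iter k phi z)| <= w) ->
  `|birkhoff phi p g y - birkhoff phi p g z| <= p%:R * w.
Proof.
move=> H; rewrite /birkhoff -sumrB.
apply: le_trans (ler_norm_sum _ _ _) _.
apply: le_trans (ler_sum _ (fun (i : 'I_p) _ => H i (ltn_ord i))) _.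
by rewrite sumr_const card_ord mulr_natl.
Qed.

End Birk.

Section Unif.
Variable R : realType.
Variables (M : pseudoMetricType R) (d : M -> M -> R).
Hypothesis hd : is_metric_for d.
Hypothesis hcpt : compact [set: M].

Lemma cont_ball (g : M -> R) (x : M) e : continuous g -> 0 < e ->
  exists2 r, 0 < r & forall y, d x y < r -> `|g x - g y| < e.
Proof.
move=> gc e0; have : \forall y \near x, `|g x - g y| < e.
  by apply: (@cvgr_dist_lt _ _ _ _ _ g (g x)) => //; exact: gc.
move=> /nbhs_ballP [r /= r0 rH]; exists r => // y dxy.
apply: rH; case: hd => _ _ _ _ hb; exact/hb.
Qed.

Lemma unif_cont (g : M -> R) e : continuous g -> 0 < e ->
  \forall delta \near (0:R)^'+, forall a b, d a b < 2 * delta -> `|g a - g b| < e.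
Proof.
move=> gc e0; case: hd => d0 deq dsym dtri hb.
have e20 : 0 < e / 2 by rewrite divr_gt0.
have Hc : forall x, [set: M] x -> \forall x' \near x & i \near (0:R)^'+,
   forall b, d x' b < 2 * i -> `|g x' - g b| < e.
  move=> x _; have [r r0 rH] := cont_ball g x (e / 2) gc e20.
  exists ([set a | d x a < r / 2], [set delta | 0 < delta < r / 4]).
    split.
      apply/nbhs_ballP; exists (r / 2); first by rewrite /= divr_gt0.
      by move=> y /hb.
    exists (r / 4); first by rewrite /= divr_gt0.
    move=> dl /= dd dl0; rewrite dl0 /=; move: dd.
    by rewrite sub0r normrN gtr0_norm.
  move=> [a delta] [/= xa /andP[dl0 dlr]] b ab.
  have xb : d x b < r.
    apply: le_lt_trans (dtri _ a _) _.
    lra.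
  have xa' : d x a < r by lra.
  have := rH a xa'; have := rH b xb.
  have -> : g a - g b = (g x - g b) - (g x - g a) by ring.
  move=> h1 h2; apply: le_lt_trans (ler_normB _ _) _.
  lra.
apply: filterS ((compact_near_coveringP _).1 hcpt R (0:R)^'+ _ _ Hc) => delta Hd a b; exact: Hd.
Qed.
End Unif.
Section Bnd.
Variable R : realType.
Variables (M : pseudoMetricType R) (d : M -> M -> R).
Hypothesis hd : is_metric_for d.
Hypothesis hcpt : compact [set: M].

Lemma cont_bnd (g : M -> R) : continuous g ->
  exists C, 1 <= C /\ forall x, `|g x| <= C.
Proof.
move=> gc; case: hd => d0 deq dsym dtri hb.
have Hc : forall x, [set: M] x -> \forall x' \near x & i \near (+oo : set_system R),
   `|g x'| <= i.
  move=> x _; have [r r0 rH] := @cont_ball R M d hd g x 1 gc ltr01.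
  exists ([set a | d x a < r], [set C | `|g x| + 1 < C]).
    split.
      apply/nbhs_ballP; exists r => //.
      by move=> y /hb.
    by exists (`|g x| + 1); split; [rewrite realE addr_ge0|move=> y /=].
  move=> [a C] [/= xa lC] /=.
  have := rH a xa.
  have : `|g a| <= `|g x| + `|g x - g a|.
    have := ler_normB (g x) (g x - g a).
    by rewrite opprB addrC subrK.
  lra.
have H : \forall C \near (+oo : set_system R), forall x, `|g x| <= C.
  by apply: filterS ((compact_near_coveringP _).1 hcpt R (+oo : set_system R) _ _ Hc) => C HC x; exact: HC.
have H1 : \forall C \near (+oo : set_system R), 1 <= C.
  by exists 1; split => // y /ltW.
have [C [HC C1]] := filter_ex (filterI H H1).
by exists C; split => // x; exact: HC.
Qed.
End Bnd.
Section Sup.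
Variable R : realType.
Local Open Scope ereal_scope.

Lemma supnorm_pt (T : Type) (F : T -> R) n (e : R) : (0 < n)%N ->
  (n%:R^-1)%:E * supnorm F < e%:E -> forall x, (`|F x| <= n%:R * e)%R.
Proof.
move=> n0 H x.
have h : (`|F x|)%:E <= supnorm F by apply: ereal_sup_ubound; exists x.
have n0' : 0 <= (n%:R^-1)%:E :> \bar R by rewrite lee_fin invr_ge0.
have h2 := lee_wpmul2l n0' h.
have := le_lt_trans h2 H; rewrite -EFinM lte_fin ltr_pdivrMl ?ltr0n//.
exact: ltW.
Qed.

Lemma supnorm_le (T : Type) (F : T -> R) n (c : R) : (0 < n)%N ->
  (forall x, (`|F x| <= n%:R * c)%R) -> (n%:R^-1)%:E * supnorm F <= c%:E.
Proof.
move=> n0 H.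
have h : supnorm F <= (n%:R * c)%:E by apply: ge_ereal_sup => _ [x _ <-]; rewrite lee_fin.
have n0' : 0 <= (n%:R^-1)%:E :> \bar R by rewrite lee_fin invr_ge0.
apply: le_trans (lee_wpmul2l n0' h) _.
by rewrite -EFinM lee_fin mulrA mulVf ?mul1r// pnatr_eq0 -lt0n.
Qed.

Lemma supnorm_ge0 (T : Type) (F : T -> R) n (x0 : T) :
  0 <= (n%:R^-1)%:E * supnorm F.
Proof.
apply: mule_ge0; first by rewrite lee_fin invr_ge0.
apply: le_trans (_ : (`|F x0|)%:E <= _); first by rewrite lee_fin.
by apply: ereal_sup_ubound; exists x0.
Qed.

Lemma osc_le (M : Type) (d : M -> M -> R) phi (G : nat -> M -> R) n p delta (c : R) :
  (0 < n)%N ->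
  (forall x y z, bowen_ball d phi p x delta y -> bowen_ball d phi p x delta z ->
     (`|G n y - G n z| <= n%:R * c)%R) ->
  bowen_osc d phi G n p delta <= c%:E.
Proof.
move=> n0 H; apply: ge_ereal_sup => _ [[y z] [x [hy hz]] <-].
by rewrite lee_fin ler_pdivrMl ?ltr0n//; apply: H hy hz.
Qed.

Lemma osc_ge0 (M : Type) (d : M -> M -> R) phi (G : nat -> M -> R) n p delta (x0 : M) :
  (forall a, d a a = 0%R) -> (0 < delta)%R ->
  0 <= bowen_osc d phi G n p delta.
Proof.
move=> daa d0; apply: le_trans (ereal_sup_ubound _); last first.
  exists (x0, x0); last by rewrite /= subrr normr0 mulr0.
  by exists x0; split => k _ /=; rewrite daa.
by [].
Qed.
End Sup.
Section Pt.
Variable R : realType.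

Lemma tri3 (a b c e : R) : `|a - e| <= `|a - b| + `|b - c| + `|c - e|.
Proof.
have -> : a - e = (a - b) + (b - c) + (c - e) by ring.
apply: le_trans (ler_normD _ _) _; rewrite lerD2r; exact: ler_normD.
Qed.

Lemma osc_pt (M : pseudoMetricType R) (d : M -> M -> R) (hd : is_metric_for d)
  phi (G : nat -> M -> R) (g : M -> R) p delta eps x y z :
  (forall a b, d a b < 2 * delta -> `|g a - g b| < eps) ->
  `|G p y - birkhoff phi p g y| <= p%:R * eps ->
  `|G p z - birkhoff phi p g z| <= p%:R * eps ->
  bowen_ball d phi p x delta y -> bowen_ball d phi p x delta z ->
  `|G p y - G p z| <= 3 * (p%:R * eps).
Proof.
case: hd => _ _ dsym dtri _ hg hy hz By Bz.
have hs : `|birkhoff phi p g y - birkhoff phi p g z| <= p%:R * eps.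
  apply: birk_osc_le => k kp; apply/ltW/hg.
  apply: le_lt_trans (dtri _ (iter k phi x) _) _.
  rewrite (dsym _ (iter k phi z)); have := By k kp; have := Bz k kp; lra.
apply: le_trans (tri3 _ (birkhoff phi p g y) (birkhoff phi p g z) _) _.
rewrite (distrC _ (G p z)); lra.
Qed.

Lemma diff_pt (M : Type) phi (G : nat -> M -> R) (g : M -> R) C j n eps x :
  (j <= n)%N -> (forall a, `|g a| <= C) ->
  `|G j x - birkhoff phi j g x| <= j%:R * eps ->
  `|G n x - birkhoff phi n g x| <= n%:R * eps ->
  `|G j x - G n x| <= j%:R * eps + (n - j)%:R * C + n%:R * eps.
Proof.
move=> jn gC hj hn.
have := @birk_diff_le R M phi g C j n x jn gC => hd.
apply: le_trans (tri3 _ (birkhoff phi j g x) (birkhoff phi n g x) _) _.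
rewrite (distrC _ (G n x)) (distrC (birkhoff phi j g x)); lra.
Qed.
End Pt.
Arguments esup_le {R}. Arguments esup_lt {R}. Arguments esup_ge0 {R}.
Arguments ecvg0_bnd {R T F FF f e}. Arguments crit0 {R}.
Arguments birk_diff_le {R T}. Arguments birk_osc_le {R T}.
Arguments cont_ball {R M d}. Arguments unif_cont {R M d}. Arguments cont_bnd {R M d}.
Arguments supnorm_pt {R T}. Arguments supnorm_le {R T}. Arguments supnorm_ge0 {R T}.
Arguments osc_le {R M}. Arguments osc_ge0 {R M}. Arguments osc_pt {R M d}. Arguments diff_pt {R M}.
Theorem lemma2p4 (R : realType) (M : pseudoMetricType R) (d : M -> M -> R)
  (hd : is_metric_for d) (hcpt : compact [set: M])
  (phi : M -> M) (hphi : continuous phi) (G : nat -> M -> R)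
  (hG : class_A phi G) :
  (fun delta : R => limn_esup (fun n : nat => bowen_osc d phi G n n delta))
     @ (0:R)^'+ --> 0%E /\
  forall m : R -> nat -> nat,
    (forall delta : R, 0 < delta -> forall n : nat, (0 < n)%N -> (m delta n < n)%N) ->
    (fun delta : R => limn_esup (fun n : nat => ((m delta n)%:R / n%:R : R)%:E))
       @ (0:R)^'+ --> 0%E ->
    (fun delta : R => limn_esup (fun n : nat =>
        ((n%:R^-1)%:E * supnorm (fun x => G (n - m delta n)%N x - G n x)%R)%E))
       @ (0:R)^'+ --> 0%E /\
    (fun delta : R => limn_esup (fun n : nat =>
        bowen_osc d phi G n (n - m delta n)%N delta))
       @ (0:R)^'+ --> 0%E.
Proof.
case: hG => _ [Gk [Gkc hGk]].
have daa : forall a, d a a = 0 by case: hd => _ deq _ _ _ a; apply/deq.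
have [x0 _] : exists x0 : M, True.
  apply: contrapT => nM.
  have [k /andP[hk _]] := filter_ex (ecvg0_bnd hGk ltr01).
  suff : (limn_esup (fun n : nat => ((n%:R^-1)%:E *
      supnorm (fun x => G n x - birkhoff phi n (Gk k) x)%R)%E) <= (-1)%:E)%E.
    by move=> /(lt_le_trans hk); rewrite ltxx.
  apply: (@esup_le _ _ _ 1%N) => n n1.
  rewrite /supnorm (_ : [set _ | x in _] = set0); last first.
    by apply/seteqP; split => // y [x _ _]; exfalso; apply: nM; exists x.
  by rewrite ereal_sup0 mulrNy gtr0_sg ?invr_gt0 ?ltr0n// mul1e leNye.
have hk : forall e : R, 0 < e -> exists k N, forall n, (N <= n)%N ->
    forall x, `|G n x - birkhoff phi n (Gk k) x| <= n%:R * e.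
  move=> e e0.
  have [k /andP[_ hk]] := filter_ex (ecvg0_bnd hGk e0).
  case: (esup_lt _ _ hk) => N _ HN.
  exists k, N.+1 => n Nn; apply: supnorm_pt; first by apply: leq_trans Nn.
  by apply: HN; apply: ltnW.
split.
  apply: crit0 => e e0.
  have e40 : 0 < e / 4 by rewrite divr_gt0.
  have [k [N HN]] := hk _ e40.
  have hu := unif_cont hd hcpt (Gk k) _ (Gkc k) e40.
  near=> delta.
  have dl0 : 0 < delta by near: delta; exact: nbhs_right_gt.
  have hdl : forall a b, d a b < 2 * delta -> `|Gk k a - Gk k b| < e / 4.
    by near: delta.
  apply/andP; split.
    by apply: esup_ge0 => n; exact: osc_ge0 daa dl0.
  apply: (@esup_le _ _ _ N.+1) => n Nn.
  apply: osc_le; first by apply: leq_trans Nn.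
  move=> x y z By Bz.
  have := osc_pt hd phi G (Gk k) n delta (e / 4) x y z hdl (HN n (ltnW Nn) y) (HN n (ltnW Nn) z) By Bz.
  have : 0 <= n%:R * (e / 4) by rewrite mulr_ge0// ltW.
  have -> : n%:R * e = 4 * (n%:R * (e / 4)) by field.
  (timeout 20 lra).
move=> m hmlt hmcvg.
suff key : forall e : R, 0 < e -> \forall delta \near (0:R)^'+,
   ((0 <= limn_esup (fun n : nat =>
        ((n%:R^-1)%:E * supnorm (fun x => G (n - m delta n)%N x - G n x)%R)%E) <= e%:E) &&
    (0 <= limn_esup (fun n : nat =>
        bowen_osc d phi G n (n - m delta n)%N delta) <= e%:E))%E.
  by split; apply: crit0 => e e0; apply: filterS (key e e0) => dl /andP[].
move=> e e0.
pose e1 := Num.min e 1.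
have e10 : 0 < e1 by rewrite lt_min e0 ltr01.
have e1e : e1 <= e by rewrite ge_min lexx.
have e11 : e1 <= 1 by rewrite ge_min lexx orbT.
pose eps := e1 / 16.
have eps0 : 0 < eps by rewrite divr_gt0.
have [k [N HN]] := hk _ eps0.
have [C [C1 HC]] := cont_bnd hd hcpt (Gk k) (Gkc k).
have C0 : 0 < C by (timeout 20 lra).
pose eta := eps / C.
have eta0 : 0 < eta by rewrite divr_gt0.
have hCe : C * eta = eps by rewrite /eta; field; (timeout 20 lra).
have hu := unif_cont hd hcpt (Gk k) _ (Gkc k) eps0.
have hm := @ecvg0_bnd R R _ (at_right_proper_filter 0) _ eta hmcvg eta0.

have hm' : \forall dl \near (0:R)^'+,
    (limn_esup (fun n : nat => ((m dl n)%:R / n%:R : R)%:E) < eta%:E)%E.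
  by apply: filterS hm => dl /andP[].
near=> delta.
have dl0 : 0 < delta by near: delta; exact: nbhs_right_gt.
have hdl : forall a b, d a b < 2 * delta -> `|Gk k a - Gk k b| < eps.
  by near: delta.
have hmd : (limn_esup (fun n : nat => ((m delta n)%:R / n%:R : R)%:E) < eta%:E)%E.
  by near: delta.
case: (esup_lt _ _ hmd) => N2 _ HN2.
have Hn : forall n, ((N.*2 + N2).+1 <= n)%N ->
  [/\ (0 < n)%N, (N <= n - m delta n)%N, (N <= n)%N,
      forall x, `|G (n - m delta n)%N x - G n x| <= 3 * (n%:R * eps) &
      3 * (n%:R * eps) <= n%:R * e / 3].
  move=> n Nn.
  have n0 : (0 < n)%N by apply: leq_trans Nn.
  have mn := hmlt delta dl0 n n0.
  have hmn : (m delta n)%:R / n%:R < eta.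
    by rewrite -lte_fin; apply: HN2; exact: leq_trans (leq_addl (N.*2) N2) (ltnW Nn).
  rewrite ltr_pdivrMr ?ltr0n// in hmn.
  have N2n : (N.*2 <= n)%N.
    by apply: leq_trans Nn; apply: leq_trans (leq_addr N2 _) (leqnSn _).
  have N2nR : 2 * N%:R <= n%:R :> R.
    by have := N2n; rewrite -(ler_nat R) -muln2 natrM mulrC.
  have etae : eta <= eps.
    by rewrite /eta ler_pdivrMr// ler_peMr// ltW.
  have n0R : 0 <= n%:R :> R by [].
  have t1 : eta * n%:R <= n%:R / 16.
    apply: le_trans (_ : eps * n%:R <= _); first by apply: ler_wpM2r.
    have e16 : eps <= 16^-1 by rewrite /eps ler_pdivrMr// mulVf// ?pnatr_eq0.
    by rewrite mulrC; apply: ler_wpM2l.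
  have hj : (n - m delta n)%:R = n%:R - (m delta n)%:R :> R by rewrite natrB //; exact: ltnW.
  have Nj : (N <= n - m delta n)%N.
    rewrite -(ler_nat R) hj; (timeout 20 lra).
  have Nn' : (N <= n)%N by apply: leq_trans Nj (leq_subr _ _).
  have jn : (n - m delta n <= n)%N by apply: leq_subr.
  split => //; last first.
    have h : n%:R * eps <= n%:R * (e / 16).
      by apply: ler_wpM2l => //; rewrite /eps; (timeout 20 lra).
    rewrite mulrA in h.
    have : 0 <= n%:R * e by rewrite mulr_ge0// ltW.
    (timeout 20 lra).
  move=> x.
  have := diff_pt phi G (Gk k) C _ _ eps x jn HC (HN _ Nj x) (HN _ Nn' x).
  rewrite subKn; last exact: ltnW.
  have h1 : (n - m delta n)%:R * eps <= n%:R * eps.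
    by apply: ler_wpM2r; [exact: ltW|rewrite ler_nat].
  have h2 : (m delta n)%:R * C <= n%:R * eps.
    rewrite -hCe; apply: le_trans (_ : (eta * n%:R) * C <= _).
      by apply: ler_wpM2r; [exact: ltW|exact: ltW].
    by rewrite [C * _]mulrC mulrA [eta * _]mulrC.
  (timeout 20 lra).
apply/andP; split; apply/andP; split.
- by apply: esup_ge0 => n; exact: supnorm_ge0 x0.
- apply: (@esup_le _ _ _ (N.*2 + N2).+1) => n Nn.
  have [n0 _ _ hA hB] := Hn n Nn.
  apply: supnorm_le => // x; apply: le_trans (hA x) _.
  have : 0 <= n%:R * e by rewrite mulr_ge0// ltW.
  (timeout 20 lra).
- by apply: esup_ge0 => n; exact: osc_ge0 daa dl0.
- apply: (@esup_le _ _ _ (N.*2 + N2).+1) => n Nn.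
  have [n0 Nj Nn' hA hB] := Hn n Nn.
  apply: osc_le => // x y z By Bz.
  have := osc_pt hd phi G (Gk k) _ delta eps x y z hdl (HN _ Nj y) (HN _ Nj z) By Bz.
  have h1 : (n - m delta n)%:R * eps <= n%:R * eps.
    by apply: ler_wpM2r; [exact: ltW|rewrite ler_nat; exact: leq_subr].
  have := hA y; have := hA z.
  have := @tri3 R (G n y) (G (n - m delta n)%N y) (G (n - m delta n)%N z) (G n z).
  rewrite (distrC (G n y) (G (n - m delta n)%N y)).
  have : 0 <= n%:R * e by rewrite mulr_ge0// ltW.
  (timeout 20 lra).
Unshelve. all: by end_near.
Qed.
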